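(* The categories $\sigma\ell\mathbb{G}$ and $\mathcal{V}_{\sigma\ell\mathbb{G}}$ are isomorphic. More precisely: (i) for every $G\in\mathcal{V}_{\sigma\ell\mathbb{G}}$, the reduct of $G$ to the $\ell$-group operations is a Dedekind $\sigma$-complete $\ell$-group, and every morphism of $\mathcal{V}_{\sigma\ell\mathbb{G}}$ is a $\sigma$-continuous $\ell$-morphism between these reducts; (ii) for every Dedekind $\sigma$-complete $\ell$-group $G$, setting $\bigvee^-(g,f_1,f_2,\dots):=\sup_{n\ge1}\{f_n\wedge g\}$ makes $G$ an object of $\mathcal{V}_{\sigma\ell\mathbb{G}}$, and every $\sigma$-continuous $\ell$-morphism is a morphism of $\mathcal{V}_{\sigma\ell\mathbb{G}}$ for these structures; (iii) the functor $U\colon\mathcal{V}_{\sigma\ell\mathbb{G}}\to\sigma\ell\mathbb{G}$ (forget $\bigvee^-$, identity on maps) and the functor $F\colon\sigma\ell\mathbb{G}\to\mathcal{V}_{\sigma\ell\mathbb{G}}$ (add $\bigvee^-$ as in (ii), identity on maps) are mutually inverse. In particular the category of Dedekind $\sigma$-complete $\ell$-groups is an infinitary variety.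
   Context: An $\ell$-group is Dedekind $\sigma$-complete if every countable subset with an upper bound has a least upper bound. An $\ell$-morphism is $\sigma$-continuous if it preserves all existing suprema of countable families. $\sigma\ell\mathbb{G}$ is the category of Dedekind $\sigma$-complete $\ell$-groups with $\sigma$-continuous $\ell$-morphisms. $\mathcal{V}_{\sigma\ell\mathbb{G}}$ is the infinitary variety of algebras $(G,0,+,-,\vee,\wedge,\bigvee^-)$ where $\bigvee^-$ has countably infinite arity, writing $\bigvee_{n\ge1}^g f_n:=\bigvee^-(g,f_1,f_2,\dots)$, satisfying the $\ell$-group axioms and the equations (A1) $\bigvee_{n\ge1}^g f_n=\bigvee_{n\ge1}^g(f_n\wedge g)$; (A2) $\bigvee_{n\ge1}^g f_n=(f_1\wedge g)\vee\bigvee_{n\ge2}^g f_n$ (where $\bigvee_{n\ge2}^g f_n:=\bigvee^-(g,f_2,f_3,\dots)$); (A3) $\bigvee_{n\ge1}^g(f_n\wedge h)\le h$ (an inequality $a\le b$ meaning the equation $a\wedge b=a$). Morphisms of $\mathcal{V}_{\sigma\ell\mathbb{G}}$ are maps preserving all these operations. *)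

(* Defs.v *)
From Stdlib Require Import Classical.

Record lsig := LSig {
  car :> Type;
  l0 : car;
  ladd : car -> car -> car;
  lopp : car -> car;
  ljoin : car -> car -> car;
  lmeet : car -> car -> car }.

Arguments l0 {_}.
Arguments ladd {_}.
Arguments lopp {_}.
Arguments ljoin {_}.
Arguments lmeet {_}.

Definition is_lgroup (G : lsig) : Prop :=
  (forall x y z : G, ladd x (ladd y z) = ladd (ladd x y) z) /\
  (forall x y : G, ladd x y = ladd y x) /\
  (forall x : G, ladd x l0 = x) /\
  (forall x : G, ladd x (lopp x) = l0) /\
  (forall x y z : G, ljoin x (ljoin y z) = ljoin (ljoin x y) z) /\
  (forall x y z : G, lmeet x (lmeet y z) = lmeet (lmeet x y) z) /\
  (forall x y : G, ljoin x y = ljoin y x) /\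
  (forall x y : G, lmeet x y = lmeet y x) /\
  (forall x y : G, ljoin x (lmeet x y) = x) /\
  (forall x y : G, lmeet x (ljoin x y) = x) /\
  (forall x y z : G, ladd x (ljoin y z) = ljoin (ladd x y) (ladd x z)).

Definition lle {G : lsig} (x y : G) : Prop := lmeet x y = x.

Definition is_sup {G : lsig} (f : nat -> G) (s : G) : Prop :=
  (forall n, lle (f n) s) /\ (forall u, (forall n, lle (f n) u) -> lle s u).

(* Dedekind sigma-completeness: every bounded-above countable (nonempty)
   family, presented as a sequence, has a least upper bound. *)
Definition dsigma_complete (G : lsig) : Prop :=
  forall f : nat -> G, (exists u, forall n, lle (f n) u) -> exists s, is_sup f s.

Definition is_lmorph {G H : lsig} (h : G -> H) : Prop :=
  h l0 = l0 /\
  (forall x y, h (ladd x y) = ladd (h x) (h y)) /\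
  (forall x, h (lopp x) = lopp (h x)) /\
  (forall x y, h (ljoin x y) = ljoin (h x) (h y)) /\
  (forall x y, h (lmeet x y) = lmeet (h x) (h y)).

Definition sigma_continuous {G H : lsig} (h : G -> H) : Prop :=
  forall (f : nat -> G) (s : G), is_sup f s -> is_sup (fun n => h (f n)) (h s).

(* The infinitary operation  \/^-(g, f_1, f_2, ...)  is encoded as
   bv g f with f 0 = f_1, f 1 = f_2, ... *)
Definition bigvee_op (G : lsig) := G -> (nat -> G) -> G.

Definition is_Vobj (G : lsig) (bv : bigvee_op G) : Prop :=
  is_lgroup G /\
  (* A1 *) (forall g f, bv g f = bv g (fun n => lmeet (f n) g)) /\
  (* A2 *) (forall g f, bv g f = ljoin (lmeet (f 0) g) (bv g (fun n => f (S n)))) /\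
  (* A3 *) (forall g h f, lle (bv g (fun n => lmeet (f n) h)) h).

Definition is_Vmorph {G H : lsig} (bvG : bigvee_op G) (bvH : bigvee_op H)
  (h : G -> H) : Prop :=
  is_lmorph h /\ (forall g f, h (bvG g f) = bvH (h g) (fun n => h (f n))).

Definition sup_bigvee (G : lsig) (bv : bigvee_op G) : Prop :=
  forall g f, is_sup (fun n => lmeet (f n) g) (bv g f).

(* Main.v *)
Require Import Defs.
From Stdlib Require Import Classical ClassicalEpsilon FunctionalExtensionality.

Lemma meet_idem (G : lsig) (HG : is_lgroup G) (x : G) : lmeet x x = x.
Proof.
  destruct HG as (_&_&_&_&_&_&_&_&A1&A2&_).
  rewrite <- (A1 x x) at 2. apply A2.
Qed.

Lemma join_idem (G : lsig) (HG : is_lgroup G) (x : G) : ljoin x x = x.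
Proof.
  destruct HG as (_&_&_&_&_&_&_&_&A1&A2&_).
  rewrite <- (A2 x x) at 2. apply A1.
Qed.

Lemma lle_join (G : lsig) (HG : is_lgroup G) (a b : G) : lle a b <-> ljoin a b = b.
Proof.
  pose proof HG as HG'.
  destruct HG as (_&_&_&_&J&M&Jc&Mc&A1&A2&_).
  unfold lle; split; intro H.
  - rewrite <- H. rewrite Jc, Mc. apply A1.
  - rewrite <- H. apply A2.
Qed.

Lemma lle_refl (G : lsig) (HG : is_lgroup G) (a : G) : lle a a.
Proof. apply meet_idem; auto. Qed.

Lemma lle_trans (G : lsig) (HG : is_lgroup G) (a b c : G) :
  lle a b -> lle b c -> lle a c.
Proof.
  destruct HG as (_&_&_&_&J&M&Jc&Mc&A1&A2&_).
  unfold lle; intros H1 H2. rewrite <- H1, <- M, H2. reflexivity.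
Qed.

Lemma lle_antisym (G : lsig) (HG : is_lgroup G) (a b : G) :
  lle a b -> lle b a -> a = b.
Proof.
  destruct HG as (_&_&_&_&J&M&Jc&Mc&A1&A2&_).
  unfold lle; intros H1 H2. rewrite <- H1. rewrite Mc. exact H2.
Qed.

Lemma meet_le_l (G : lsig) (HG : is_lgroup G) (a b : G) : lle (lmeet a b) a.
Proof.
  pose proof (meet_idem G HG a) as Hi.
  destruct HG as (_&_&_&_&J&M&Jc&Mc&A1&A2&_).
  unfold lle. rewrite <- M, (Mc b a), M, Hi. reflexivity.
Qed.

Lemma meet_le_r (G : lsig) (HG : is_lgroup G) (a b : G) : lle (lmeet a b) b.
Proof.
  pose proof HG as HG'.
  destruct HG as (_&_&_&_&J&M&Jc&Mc&A1&A2&_).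
  rewrite Mc. apply meet_le_l; auto.
Qed.

Lemma join_le_l (G : lsig) (HG : is_lgroup G) (a b : G) : lle a (ljoin a b).
Proof.
  apply lle_join; auto.
  pose proof (join_idem G HG a) as Hi.
  destruct HG as (_&_&_&_&J&M&Jc&Mc&A1&A2&_).
  rewrite J, Hi. reflexivity.
Qed.

Lemma join_le_r (G : lsig) (HG : is_lgroup G) (a b : G) : lle b (ljoin a b).
Proof.
  pose proof HG as HG'.
  destruct HG as (_&_&_&_&J&M&Jc&Mc&A1&A2&_).
  rewrite Jc. apply join_le_l; auto.
Qed.

Lemma join_lub (G : lsig) (HG : is_lgroup G) (a b u : G) :
  lle a u -> lle b u -> lle (ljoin a b) u.
Proof.
  intros H1 H2. apply lle_join in H1; auto. apply lle_join in H2; auto.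
  apply lle_join; auto.
  pose proof HG as HG'.
  destruct HG as (_&_&_&_&J&M&Jc&Mc&A1&A2&_).
  rewrite <- J, H2, H1. reflexivity.
Qed.

Lemma sup_unique (G : lsig) (HG : is_lgroup G) (f : nat -> G) (s t : G) :
  is_sup f s -> is_sup f t -> s = t.
Proof.
  intros [H1 H2] [H3 H4]. apply lle_antisym; auto.
Qed.

Lemma sup_ext (G : lsig) (f f' : nat -> G) (s : G) :
  (forall n, f n = f' n) -> is_sup f s -> is_sup f' s.
Proof.
  intros E [H1 H2]. split.
  - intro n; rewrite <- E; auto.
  - intros u Hu; apply H2; intro n; rewrite E; auto.
Qed.

Lemma Vobj_sup (G : lsig) (bv : bigvee_op G) : is_Vobj G bv -> sup_bigvee G bv.
Proof.
  intros (HG & A1 & A2 & A3) g f. split.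
  - intro n. revert f. induction n as [|n IH]; intro f.
    + rewrite (A2 g f). apply join_le_l; auto.
    + rewrite (A2 g f). eapply lle_trans; [auto| apply (IH (fun n => f (S n)))|].
      apply join_le_r; auto.
  - intros u Hu. rewrite (A1 g f).
    replace (fun n => lmeet (f n) g) with (fun n => lmeet (lmeet (f n) g) u).
    + apply A3.
    + apply functional_extensionality; intro n. apply Hu.
Qed.

Theorem mainTheorem1 :
  (* (i) objects of V give Dedekind sigma-complete l-groups *)
  (forall (G : lsig) (bv : bigvee_op G),
      is_Vobj G bv -> is_lgroup G /\ dsigma_complete G) /\
  (* (i) morphisms of V are sigma-continuous l-morphisms *)
  (forall (G H : lsig) (bvG : bigvee_op G) (bvH : bigvee_op H) (h : G -> H),
      is_Vobj G bvG -> is_Vobj H bvH -> is_Vmorph bvG bvH h ->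
      is_lmorph h /\ sigma_continuous h) /\
  (* (ii) the supremum operation is well defined and makes G an object of V *)
  (forall G : lsig, is_lgroup G -> dsigma_complete G ->
      (exists bv : bigvee_op G, sup_bigvee G bv) /\
      (forall bv : bigvee_op G, sup_bigvee G bv -> is_Vobj G bv)) /\
  (* (ii) sigma-continuous l-morphisms are morphisms of V *)
  (forall (G H : lsig) (bvG : bigvee_op G) (bvH : bigvee_op H) (h : G -> H),
      is_lgroup G -> dsigma_complete G -> is_lgroup H -> dsigma_complete H ->
      sup_bigvee G bvG -> sup_bigvee H bvH ->
      is_lmorph h -> sigma_continuous h -> is_Vmorph bvG bvH h) /\
  (* (iii) F o U = id: the operation of any V-object is the one of (ii)
     (U o F = id and the action on maps are identities by construction) *)
  (forall (G : lsig) (bv : bigvee_op G), is_Vobj G bv -> sup_bigvee G bv).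
Proof.
  split; [|split; [|split; [|split]]].
  - intros G bv HV. pose proof (Vobj_sup G bv HV) as HS.
    destruct HV as (HG & _). split; auto.
    intros f [u Hu]. exists (bv u f). apply (sup_ext G _ _ _ (fun n => Hu n)), HS.
  - intros G H bvG bvH h HVG HVH [Hm Hb]. split; auto.
    pose proof (Vobj_sup G bvG HVG) as SG. pose proof (Vobj_sup H bvH HVH) as SH.
    destruct HVG as (HG & _). destruct HVH as (HH & _).
    destruct Hm as (_&_&_&_&hm).
    intros f s Hs.
    assert (E : s = bvG s f).
    { apply (sup_unique G HG f); auto.
      apply (sup_ext G (fun n => lmeet (f n) s)); [|apply SG].
      intro n; apply (proj1 Hs n). }
    assert (E' : h s = bvH (h s) (fun n => h (f n))) by (rewrite E at 1; apply Hb).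
    pose proof (SH (h s) (fun n => h (f n))) as S1. rewrite <- E' in S1.
    apply (sup_ext H (fun n => lmeet (h (f n)) (h s))); [|exact S1].
    intro n. rewrite <- hm. f_equal. apply (proj1 Hs n).
  - intros G HG HC. split.
    + assert (X : forall (g : G) (f : nat -> G), {s | is_sup (fun n => lmeet (f n) g) s}).
      { intros g f. apply constructive_indefinite_description. apply HC.
        exists g. intro n. apply meet_le_r; auto. }
      exists (fun g f => proj1_sig (X g f)). intros g f. exact (proj2_sig (X g f)).
    + intros bv HS. split; [auto|split; [|split]].
      * intros g f. apply (sup_unique G HG (fun n => lmeet (f n) g)); [apply HS|].
        apply (sup_ext G (fun n => lmeet (lmeet (f n) g) g)); [|apply HS].
        intro n. pose proof HG as HG2. destruct HG2 as (_&_&_&_&J&M&Jc&Mc&_). rewrite <- M, (meet_idem G HG); reflexivity.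
      * intros g f. apply (sup_unique G HG (fun n => lmeet (f n) g)); [apply HS|].
        split.
        -- intros [|n].
           ++ apply join_le_l; auto.
           ++ eapply lle_trans; [auto| apply (proj1 (HS g (fun n => f (S n))) n)|].
              apply join_le_r; auto.
        -- intros u Hu. apply join_lub; auto.
           apply (proj2 (HS g (fun n => f (S n)))). intro n; apply Hu.
      * intros g h f. apply (proj2 (HS g _)). intro n.
        eapply lle_trans; [auto|apply meet_le_l; auto|]. apply meet_le_r; auto.
  - intros G H bvG bvH h HG _ HH _ SG SH Hm Hc. split; auto.
    intros g f. apply (sup_unique H HH (fun n => lmeet (h (f n)) (h g))); [|apply SH].
    apply (sup_ext H (fun n => h (lmeet (f n) g))); [|apply Hc, SG].
    intro n. destruct Hm as (_&_&_&_&hm). apply hm.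
  - exact Vobj_sup.
Qed.
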